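(* There exists a universal constant $c>0$ such that the following holds. Let $n\in\mathbb{N}$, $q$ a prime power, $1\le\ell<q$ an integer, and $\rho\in(0,1-\ell/q)$. Let $T_1,\dots,T_n\subseteq\mathbb{F}_q$ each have size $\ell$. If $n\ge\left(\frac{\log q}{\rho(1-\ell/q-\rho)}\right)^{c}$, then the list-recovery ball $B_\rho(T_1\times\cdots\times T_n)$ is $\delta$-mixing for $$\delta=\log_q\left(\frac{(q-\ell)(1-\rho)}{\rho\ell}\right)\cdot\frac{\rho^4(1-\ell/q-\rho)^2}{16\log q}.$$
   Context: $\log$ is base 2. $B_\rho(T_1\times\cdots\times T_n)=\{x\in\mathbb{F}_q^n: |\{i:x_i\notin T_i\}|\le\rho n\}$. A set $T\subseteq\mathbb{F}_q^n$ is $\delta$-mixing if for all nonzero $\alpha,\beta\in\mathbb{F}_q$ and all $z\in\mathbb{F}_q^n$, $\Pr[\alpha X+\beta X'\in T+z]\le q^{-\delta n}$, where $X,X'$ are independent and uniform on $T$. *)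

(* Defs.v *)
From mathcomp Require Import all_boot all_algebra.
From Stdlib Require Import Reals.

Set Implicit Arguments.
Unset Strict Implicit.
Unset Printing Implicit Defensive.
Import GRing.Theory.
Local Open Scope ring_scope.

Definition log2 (x : R) : R := Rdiv (ln x) (ln 2).

Definition Rleb' (x y : R) : bool := if Rle_dec x y then true else false.

Definition lr_ball (F : finFieldType) (n : nat) (T : 'I_n -> {set F}) (rho : R)
  : {set 'rV[F]_n} :=
  [set x : 'rV[F]_n |
     Rleb' (INR #|[set i : 'I_n | x ord0 i \notin T i]|) (Rmult rho (INR n))].

(* Pr over X, X' independent uniform on S of [a X + b X' \in S + z],
   computed as a count divided by |S|^2. *)
Definition mix_prob (F : finFieldType) (n : nat) (S : {set 'rV[F]_n})
  (a b : F) (z : 'rV[F]_n) : R :=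
  Rdiv (INR #|[set p : 'rV[F]_n * 'rV[F]_n |
                 [&& p.1 \in S, p.2 \in S & a *: p.1 + b *: p.2 - z \in S]]|)
       (INR (#|S| * #|S|)).

Definition mixing (F : finFieldType) (n : nat) (S : {set 'rV[F]_n}) (delta : R)
  : Prop :=
  forall (a b : F) (z : 'rV[F]_n), a != 0 -> b != 0 ->
    Rle (mix_prob S a b z) (Rpower (INR #|F|) (Ropp (Rmult delta (INR n)))).

Local Open Scope R_scope.

Definition mix_delta (q l : nat) (rho : R) : R :=
  (ln (((INR q - INR l) * (1 - rho)) / (rho * INR l)) / ln (INR q)) *
  ((rho ^ 4 * (1 - INR l / INR q - rho) ^ 2) / (16 * log2 (INR q))).

Definition n_threshold (q l : nat) (rho c : R) : R :=
  Rpower (log2 (INR q) / (rho * (1 - INR l / INR q - rho))) c.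

(* Main.v *)
Require Import Defs.
From mathcomp Require Import all_boot all_algebra.
From Stdlib Require Import Reals.
From Stdlib Require Import Lra ZArith.
From mathcomp Require Import zify.
Import ssrnat ssralg.
Set Implicit Arguments. Unset Strict Implicit. Unset Printing Implicit Defensive.
Import GRing.Theory.

Section Mode.
Variables n K : nat.
Hypotheses (K0 : 0 < K) (Kn : K < n).
Definition tj j := 'C(n, j) * ((n - K) ^ (n - j) * K ^ j).

Lemma tj_rec j : j < n -> tj j.+1 * (j.+1 * (n - K)) = tj j * ((n - j) * K).
Proof.
move=> jn; rewrite /tj.
have -> : n - j = (n - j.+1).+1 by lia.
rewrite !expnS.
have e := mul_bin_left n j.
set a := (n - K) ^ (n - j.+1); set b := K ^ j.
have -> : (n - j.+1).+1 = n - j by lia.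
transitivity ((j.+1 * 'C(n, j.+1)) * (a * (n - K) * (b * K))).
  by lia.
rewrite e; lia.
Qed.

Lemma tj_up j : j < K -> tj j <= tj j.+1.
Proof.
move=> jK; have := tj_rec (ltn_trans jK Kn).
have h1 : j.+1 * (n - K) <= (n - j) * K by nia.
move=> e.
have pos : 0 < j.+1 * (n - K) by rewrite muln_gt0 /=; lia.
rewrite -(leq_pmul2r pos) e; exact: leq_mul.
Qed.

Lemma tj_down j : K <= j -> j < n -> tj j.+1 <= tj j.
Proof.
move=> Kj jn; have := tj_rec jn.
have h1 : (n - j) * K <= j.+1 * (n - K) by nia.
move=> e.
have pos : 0 < j.+1 * (n - K) by rewrite muln_gt0 /=; lia.
rewrite -(leq_pmul2r pos) e; exact: leq_mul.
Qed.

Lemma tj_max j : j <= n -> tj j <= tj K.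
Proof.
move=> jn; case: (leqP j K) => hj.
  have : forall d, d <= K -> tj (K - d) <= tj K.
    elim=> [|d IH] hd; first by rewrite subn0.
    have h' : d <= K by lia. apply: leq_trans (IH h').
    have -> : K - d = (K - d.+1).+1 by lia.
    apply: tj_up; lia.
  move=> /(_ (K - j)); rewrite subKn //; apply; lia.
have : forall d, K + d <= n -> tj (K + d) <= tj K.
  elim=> [|d IH] hd; first by rewrite addn0.
  have h' : K + d <= n by lia. apply: leq_trans (IH h').
  rewrite addnS; apply: tj_down; lia.
move=> /(_ (j - K)); rewrite subnKC ?(ltnW hj) //; apply; lia.
Qed.

Lemma mode_bound : n ^ n <= n.+1 * tj K.
Proof.
have -> : n ^ n = (n - K + K) ^ n by rewrite subnK // ltnW.
rewrite expnDn.
apply: (@leq_trans (\sum_(i < n.+1) tj K)).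
  apply: leq_sum => i _; exact: (tj_max (ltnSE (ltn_ord i))).
by rewrite sum_nat_const card_ord.
Qed.
End Mode.

Section RowSec.
Local Open Scope ring_scope.
Lemma sum_row_prod (F : finType) n (f : 'I_n -> F -> nat) :
  (\sum_(x : 'rV[F]_n) \prod_i f i (x ord0 i) = \prod_i \sum_u f i u)%N.
Proof.
rewrite bigA_distr_bigA.
rewrite (reindex (fun g : {ffun 'I_n -> F} => \row_i g i)%R) /=.
  by apply: eq_bigr => g _; apply: eq_bigr => i _; rewrite mxE.
exists (fun x : 'rV[F]_n => [ffun i => x ord0 i]) => [g _|x _].
  by apply/ffunP => i; rewrite ffunE mxE.
by apply/rowP => i; rewrite mxE ffunE.
Qed.

Lemma sum_row2_prod (F : finType) n (f : 'I_n -> F * F -> nat) :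
  (\sum_(p : 'rV[F]_n * 'rV[F]_n) \prod_i f i (p.1 ord0 i, p.2 ord0 i) =
  \prod_i \sum_uu f i uu)%N.
Proof.
rewrite bigA_distr_bigA.
rewrite (reindex (fun g : {ffun 'I_n -> F * F} => (\row_i (g i).1, \row_i (g i).2))) /=.
  apply: eq_bigr => g _; apply: eq_bigr => i _; rewrite !mxE; by case: (g i).
exists (fun p : 'rV[F]_n * 'rV[F]_n => [ffun i => (p.1 ord0 i, p.2 ord0 i)]) => [g _|[x y] _].
  by apply/ffunP => i; rewrite ffunE !mxE; case: (g i).
by congr (_, _); apply/rowP => i; rewrite mxE ffunE.
Qed.
End RowSec.

Lemma sum_bool (X : finType) (P : pred X) : \sum_x (P x : nat) = #|[set x | P x]|.
Proof. by rewrite -sum1dep_card [RHS]big_mkcond; apply: eq_bigr => x _; case: (P x). Qed.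

Lemma prod_bool (I : finType) (P : pred I) : \prod_i (P i : nat) = [forall i, P i].
Proof.
case: forallP => h.
  by apply: big1 => i _; rewrite h.
have [i ni] : exists i, ~~ P i.
  apply/existsP; apply: contraT; rewrite negb_exists => /forallP hh.
  by exfalso; apply: h => i; have := hh i; rewrite negbK.
by rewrite (bigD1 i) //= (negbTE ni) mul0n.
Qed.

Lemma sum_pick (X : finType) (P : pred X) (x0 : X) :
  \sum_(E | P E) (x0 == E : nat) = P x0.
Proof.
rewrite big_mkcond (bigD1 x0) //= eqxx big1 ?addn0; first by case: (P x0).
by move=> E /negbTE; rewrite eq_sym => ->; case: (P E).
Qed.

Section Level.
Variables (F : finType) (n : nat) (T : 'I_n -> {set F}) (l : nat).
Hypothesis HT : forall i, #|T i| = l.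
Local Notation q := #|F|.

Definition badset (x : 'rV[F]_n) := [set i | x ord0 i \notin T i].

Lemma card_badset E :
  #|[set x : 'rV[F]_n | badset x == E]| = (q - l) ^ #|E| * l ^ (n - #|E|).
Proof.
rewrite -sum_bool.
transitivity (\sum_(x : 'rV[F]_n) \prod_i (((x ord0 i \notin T i) == (i \in E)) : nat)).
  apply: eq_bigr => x _; rewrite prod_bool; congr nat_of_bool.
  apply/eqP/forallP => [<- i|h]; first by rewrite inE.
  by apply/setP => i; rewrite inE; exact/eqP/h.
rewrite (sum_row_prod (fun i u => (((u \notin T i) == (i \in E)) : nat))).
transitivity (\prod_i (if i \in E then q - l else l)).
  apply: eq_bigr => i _; rewrite sum_bool; case: (i \in E).
    have -> : [set u | (u \notin T i) == true] = ~: T i.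
      by apply/setP => u; rewrite !inE eqb_id.
    have := cardsC (T i); rewrite HT; lia.
  have -> : [set u | (u \notin T i) == false] = T i.
    by apply/setP => u; rewrite !inE eqbF_neg negbK.
  by rewrite HT.
rewrite (bigID (mem E)) /=.
rewrite (eq_bigr (fun _ => q - l)); last by move=> i ->.
rewrite [X in _ * X](eq_bigr (fun _ => l)); last by move=> i; case: (i \in E).
rewrite prod_nat_const.
rewrite (eq_bigl (mem (~: E))); last by move=> i /=; rewrite !inE.
rewrite prod_nat_const.
have := cardsC E; rewrite card_ord => h.
by have -> : #|~: E| = n - #|E| by lia.
Qed.

Lemma card_level k :
  #|[set x : 'rV[F]_n | #|badset x| == k]| = 'C(n, k) * ((q - l) ^ k * l ^ (n - k)).
Proof.
rewrite -sum_bool.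
transitivity (\sum_(x : 'rV[F]_n) \sum_(E : {set 'I_n} | #|E| == k) (badset x == E : nat)).
  by apply: eq_bigr => x _; rewrite (sum_pick (fun E : {set 'I_n} => #|E| == k)).
rewrite exchange_big /=.
transitivity (\sum_(E : {set 'I_n} | #|E| == k) ((q - l) ^ k * l ^ (n - k))).
  apply: eq_bigr => E /eqP hE.
  by rewrite sum_bool card_badset hE.
rewrite (eq_bigl (mem [set E : {set 'I_n} | #|E| == k])); last by move=> E /=; rewrite !inE.
by rewrite sum_nat_const card_draws card_ord.
Qed.
End Level.

Lemma expn_mono A B e : A <= B -> A ^ e <= B ^ e.
Proof. by move=> h; elim: e => // e IH; rewrite !expnS leq_mul. Qed.

Section Coord.
Variables (F : finFieldType) (T : {set F}) (l Aw Bw : nat).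
Hypotheses (HT : #|T| = l) (AB : Aw <= Bw).
Variables (a b z : F).
Hypotheses (a0 : a != 0%R) (b0 : b != 0%R).

Definition wt u := if u \in T then Bw else Aw.
Definition cnd u v := ((a * u + b * v - z)%R \in T).

Lemma wt_split u : wt u = Aw + (Bw - Aw) * (u \in T).
Proof. rewrite /wt; case: (u \in T) => /=; lia. Qed.

Lemma card_c1 u : #|[set v | cnd u v]| = l.
Proof.
have -> : [set v | cnd u v] = (fun v => (a * u + b * v - z)%R) @^-1: T.
  by apply/setP => v; rewrite !inE.
by rewrite card_preimset // => v w h; apply: (mulfI b0); apply: (addrI (a * u)%R); apply: (addIr (- z)%R).
Qed.

Lemma card_c2 v : #|[set u | cnd u v]| = l.
Proof.
have -> : [set u | cnd u v] = (fun u => (a * u + b * v - z)%R) @^-1: T.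
  by apply/setP => u; rewrite !inE.
by rewrite card_preimset // => u w h; apply: (mulfI a0); apply: (addIr (b * v)%R); apply: (addIr (- z)%R).
Qed.

Definition mm u := \sum_v (v \in T) * cnd u v.

Lemma inner u : \sum_v wt v * cnd u v = Aw * l + (Bw - Aw) * mm u.
Proof.
rewrite (eq_bigr (fun v => Aw * cnd u v + (Bw - Aw) * ((v \in T) * cnd u v))); last first.
  by move=> v _; rewrite wt_split mulnDl mulnA.
by rewrite big_split /= -!big_distrr /= sum_bool card_c1.
Qed.

Lemma sum_bool_T : \sum_v ((v \in T) : nat) = l.
Proof. by rewrite sum_bool -HT; apply: eq_card => v; rewrite inE. Qed.

Lemma sum_mm : \sum_u mm u = l * l.
Proof.
rewrite /mm exchange_big /=.
rewrite (eq_bigr (fun v => (v \in T) * l)); last first.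
  by move=> v _; rewrite -big_distrr /= sum_bool card_c2.
by rewrite -big_distrl /= sum_bool_T.
Qed.

Lemma mm_le u : mm u <= l.
Proof.
rewrite -sum_bool_T /mm; apply: leq_sum => v _.
by case: (v \in T); case: (cnd u v).
Qed.

Lemma G_bound :
  \sum_u \sum_v wt u * wt v * cnd u v <=
  Aw * l * (\sum_u wt u) + (Bw - Aw) * Bw * l ^ 2.
Proof.
have e1 : \sum_u \sum_v wt u * wt v * cnd u v =
    \sum_u (wt u * (Aw * l) + (Bw - Aw) * (wt u * mm u)).
  apply: eq_bigr => u _.
  transitivity (wt u * \sum_v wt v * cnd u v).
    by rewrite big_distrr /=; apply: eq_bigr => v _; rewrite mulnA.
  rewrite inner; set x := wt u; set y := mm u; nia.
have e2 : \sum_u wt u * mm u = Aw * (l * l) + (Bw - Aw) * \sum_u ((u \in T) * mm u).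
  rewrite -sum_mm !big_distrr -big_split /=.
  by apply: eq_bigr => u _; rewrite wt_split mulnDl mulnA.
have h3 : \sum_u ((u \in T) * mm u) <= l * l.
  rewrite -{1}sum_bool_T big_distrl /=; apply: leq_sum => u _.
  by rewrite leq_mul2l mm_le orbT.
rewrite e1 big_split /= -big_distrl -big_distrr /= e2.
rewrite -mulnn.
set S := \sum_u _ in h3 *; set W := \sum_u wt u.
have h4 : (Bw - Aw) * ((Bw - Aw) * S) <= (Bw - Aw) * ((Bw - Aw) * (l * l)).
  by rewrite !leq_mul2l h3 !orbT.
have h6 : Aw + (Bw - Aw) = Bw by lia.
rewrite -{2}h6; nia.
Qed.
End Coord.

Lemma prod_if (I : finType) (P : pred I) A B :
  \prod_i (if P i then B else A) = B ^ #|[set i | P i]| * A ^ #|[set i | ~~ P i]|.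
Proof.
rewrite (bigID P) /=.
rewrite (eq_bigr (fun _ => B)); last by move=> i ->.
rewrite [X in _ * X](eq_bigr (fun _ => A)); last by move=> i; case: (P i).
rewrite (eq_bigl (mem [set i | P i])); last by move=> i /=; rewrite !inE.
rewrite prod_nat_const.
rewrite (eq_bigl (mem [set i | ~~ P i])); last by move=> i /=; rewrite !inE.
by rewrite prod_nat_const.
Qed.

Lemma prod_if_ge (I : finType) (P : pred I) A B k :
  A <= B -> #|[set i | ~~ P i]| <= k -> k <= #|I| ->
  B ^ (#|I| - k) * A ^ k <= \prod_i (if P i then B else A).
Proof.
move=> AB hb hk; rewrite prod_if.
set g := #|[set i | P i]|; set c := #|[set i | ~~ P i]| in hb *.
have hgc : g + c = #|I|.
  rewrite /g /c; have -> : [set i | ~~ P i] = ~: [set i | P i] by apply/setP => i; rewrite !inE.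
  by rewrite cardsC.
have -> : g = (#|I| - k) + (k - c) by lia.
have -> : k = (k - c) + c by lia.
have -> : #|I| - (k - c + c) = #|I| - k by lia.
rewrite !expnD mulnA leq_mul2r; apply/orP; right.
by rewrite leq_mul2l addnK; apply/orP; right; exact: expn_mono.
Qed.

Section Main.
Variables (F : finFieldType) (n : nat) (T : 'I_n -> {set F}) (l K : nat).
Local Notation q := #|F|.
Hypotheses (HT : forall i, #|T i| = l) (K0 : 0 < K) (Kn : K < n)
  (KQ : K * q <= n * (q - l)) (lq : l < q).
Variables (S : {set 'rV[F]_n}) (a b : F) (z : 'rV[F]_n).
Hypotheses (a0 : a != 0%R) (b0 : b != 0%R).
Hypotheses (HS1 : forall x, x \in S -> #|badset T x| <= K)
           (HS2 : forall x, #|badset T x| == K -> x \in S).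
Variables D E : nat.

Definition Aw := K * l.
Definition Bw := (n - K) * (q - l).
Definition VV := l * (q - l) * n.
Definition Gb := Aw * l * VV + (Bw - Aw) * Bw * l ^ 2.
Definition wK := Bw ^ (n - K) * Aw ^ K.
Definition Wt i u := wt (T i) Aw Bw u.
Definition WW (x : 'rV[F]_n) := \prod_i Wt i (x ord0 i).

Lemma AB : Aw <= Bw.
Proof. rewrite /Aw /Bw; nia. Qed.

Lemma sumwt i : \sum_u Wt i u = VV.
Proof.
rewrite /Wt (eq_bigr (fun u => Aw + (Bw - Aw) * (u \in T i))); last by move=> u _; rewrite (wt_split (HT i) AB a0 b0).
rewrite big_split /= sum_nat_const -big_distrr /=.
rewrite (sum_bool_T (HT i)).
have -> : #|(xpredT : pred F)| = q by [].
have := AB; rewrite /VV /Aw /Bw => h.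
have hq : q = (q - l) + l by lia.
have hn : n = (n - K) + K by lia.
set Q := q - l in h hq *.
set m := n - K in h hn *.
rewrite hq hn; nia.
Qed.

Lemma coord i (zi : F) :
  \sum_(uu : F * F) Wt i uu.1 * Wt i uu.2 *
     (if cnd (T i) a b zi uu.1 uu.2 then D + E else D) <= D * VV ^ 2 + E * Gb.
Proof.
rewrite (eq_bigr (fun uu => D * (Wt i uu.1 * Wt i uu.2) +
    E * (Wt i uu.1 * Wt i uu.2 * cnd (T i) a b zi uu.1 uu.2))); last first.
  move=> uu _; case: (cnd _ _ _ _ _ _) => /=; set x := Wt i uu.1 * Wt i uu.2; nia.
rewrite big_split /= -!big_distrr /=.
rewrite -(pair_bigA _ (fun u v => Wt i u * Wt i v)) /=.
rewrite -(pair_bigA _ (fun u v => Wt i u * Wt i v * cnd (T i) a b zi u v)) /=.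
have e1 : \sum_u \sum_v Wt i u * Wt i v = VV ^ 2.
  rewrite -mulnn -{1}(sumwt i) big_distrl /=.
  by apply: eq_bigr => u _; rewrite -big_distrr /= sumwt.
rewrite e1 leq_add2l leq_mul2l; apply/orP; right.
have := G_bound (HT i) AB zi a0 b0; rewrite /Wt /Gb -/(Wt i) sumwt; apply.
Qed.

Lemma W_ge x : #|badset T x| <= K -> wK <= WW x.
Proof.
move=> hx; rewrite /wK /WW /Wt /wt.
have := @prod_if_ge _ (fun i => x ord0 i \in T i) Aw Bw K AB hx.
by rewrite card_ord; apply; apply: ltnW.
Qed.

Lemma levelK_le : 'C(n, K) * ((q - l) ^ K * l ^ (n - K)) <= #|S|.
Proof.
rewrite -(card_level HT K); apply: subset_leq_card; apply/subsetP => x.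
by rewrite inE => /HS2.
Qed.

Lemma Vn_bound : VV ^ n <= n.+1 * #|S| * wK.
Proof.
have h1 := mode_bound K0 Kn.
apply: (@leq_trans (n.+1 * ('C(n, K) * ((q - l) ^ K * l ^ (n - K))) * wK)); last first.
  by rewrite leq_mul2r leq_mul2l levelK_le !orbT.
have e : 'C(n, K) * ((q - l) ^ K * l ^ (n - K)) * wK = tj n K K * (l * (q - l)) ^ n.
  rewrite /wK /tj /Aw /Bw !expnMn.
  have eQ : (q - l) ^ n = (q - l) ^ K * (q - l) ^ (n - K) by rewrite -expnD subnKC // ltnW.
  have eL : l ^ n = l ^ (n - K) * l ^ K by rewrite -expnD subnK // ltnW.
  rewrite eQ eL.
  set x1 := 'C(n, K); set x2 := (q - l) ^ K; set x3 := l ^ (n - K); set x4 := (n - K) ^ (n - K).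
  set x5 := (q - l) ^ (n - K); set x6 := K ^ K; set x7 := l ^ K.
  nia.
rewrite -mulnA e /VV mulnC expnMn mulnA leq_mul2r h1 orbT.
all: by [].
Qed.

Definition Ncount := #|[set p : 'rV[F]_n * 'rV[F]_n |
   [&& p.1 \in S, p.2 \in S & (a *: p.1 + b *: p.2 - z)%R \in S]]|.

Definition Pc (p : 'rV[F]_n * 'rV[F]_n) :=
  \prod_i (if cnd (T i) a b (z ord0 i) (p.1 ord0 i) (p.2 ord0 i) then D + E else D).

Lemma main1 : Ncount * (wK * wK * ((D + E) ^ (n - K) * D ^ K)) <= (D * VV ^ 2 + E * Gb) ^ n.
Proof.
rewrite /Ncount -sum_bool big_distrl /=.
apply: (@leq_trans (\sum_(p : 'rV[F]_n * 'rV[F]_n) WW p.1 * WW p.2 * Pc p)).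
  apply: leq_sum => p _.
  case: andP => [[h1 /andP[h2 h3]]|]; last by rewrite mul0n.
  rewrite mul1n; apply: leq_mul; first by apply: leq_mul; apply: W_ge; apply: HS1.
  have hb := HS1 h3.
  have := @prod_if_ge _ (fun i => cnd (T i) a b (z ord0 i) (p.1 ord0 i) (p.2 ord0 i)) D (D + E) K (leq_addr _ _).
  rewrite card_ord /Pc; apply; last by apply: ltnW.
  apply: leq_trans hb; apply: subset_leq_card; apply/subsetP => i.
  by rewrite !inE /cnd !mxE.
have e := sum_row2_prod (fun i uu => Wt i uu.1 * Wt i uu.2 *
     (if cnd (T i) a b (z ord0 i) uu.1 uu.2 then D + E else D)).
rewrite /= in e.
rewrite (eq_bigr (fun p : 'rV[F]_n * 'rV[F]_n => \prod_i (Wt i (p.1 ord0 i) * Wt i (p.2 ord0 i) *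
     (if cnd (T i) a b (z ord0 i) (p.1 ord0 i) (p.2 ord0 i) then D + E else D)))); last first.
  by move=> p _; rewrite /WW /Pc -!big_split.
rewrite e.
apply: (@leq_trans (\prod_(i < n) (D * VV ^ 2 + E * Gb))); last by rewrite prod_nat_const card_ord.
by apply: leq_prod => i _; apply: coord.
Qed.

Lemma main_nat :
  Ncount * (VV ^ n * VV ^ n) * ((D + E) ^ (n - K) * D ^ K) <=
  (n.+1 * #|S|) ^ 2 * (D * VV ^ 2 + E * Gb) ^ n.
Proof.
have h := Vn_bound; have h2 := main1.
apply: (@leq_trans (Ncount * ((n.+1 * #|S| * wK) * (n.+1 * #|S| * wK)) * ((D + E) ^ (n - K) * D ^ K))).
  by rewrite leq_mul2r leq_mul2l (leq_mul h h) !orbT.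
apply: (@leq_trans ((n.+1 * #|S|) ^ 2 * (Ncount * (wK * wK * ((D + E) ^ (n - K) * D ^ K))))).
  rewrite -mulnn; set x := n.+1 * #|S|; set y := (D + E) ^ (n - K) * D ^ K.
  by rewrite eq_leq //; lia.
by rewrite leq_mul2l h2 orbT.
Qed.
End Main.
Section RealAux.
Local Open Scope R_scope.

Lemma INR_expn (m k : nat) : INR (m ^ k)%N = INR m ^ k.
Proof. elim: k => [|k IH]; first by reflexivity. by rewrite expnS mult_INR IH. Qed.

Lemma exp_le_mono x y : x <= y -> exp x <= exp y.
Proof. move=> h; case: (Rle_lt_or_eq_dec _ _ h) => [/exp_increasing|->]; lra. Qed.

Lemma ln_le_mono x y : 0 < x -> x <= y -> ln x <= ln y.
Proof. move=> h0 h; case: (Rle_lt_or_eq_dec _ _ h) => [/(ln_increasing _ _ h0)|->]; lra. Qed.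

Lemma ln_le_sub1 y : 0 < y -> ln y <= y - 1.
Proof. move=> h; have := exp_ineq1_le (ln y); rewrite exp_ln //; lra. Qed.

Lemma exp_pow_nat (x : R) (k : nat) : exp x ^ k = exp (INR k * x).
Proof.
elim: k => [|k IH]; first by rewrite /= Rmult_0_l exp_0.
change (exp x ^ k.+1) with (exp x * exp x ^ k).
rewrite IH -exp_plus S_INR; congr exp; lra.
Qed.

Lemma exp_h_le h : 0 <= h -> exp (h / (1 + h)) <= 1 + h.
Proof.
move=> h0.
have e1 := exp_ineq1_le (- (h / (1 + h))).
have e2 : 1 + - (h / (1 + h)) = / (1 + h) by field; lra.
rewrite e2 in e1.
have hp : 0 < exp (- (h / (1 + h))) := exp_pos _.
have e3 : / exp (- (h / (1 + h))) <= / / (1 + h).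
  by apply: Rinv_le_contravar; [apply: Rinv_0_lt_compat; lra | exact e1].
by rewrite Rinv_inv exp_Ropp Rinv_inv in e3.
Qed.

Lemma chern (nn K : nat) (h p : R) :
  0 <= h -> 0 <= p -> (K <= nn)%N -> (0 < nn)%N ->
  p + 2 * h = 1 - INR K / INR nn ->
  (1 + h * p) ^ nn / (1 + h) ^ (nn - K) <= exp (- (INR nn * h ^ 2 / (1 + h))).
Proof.
move=> h0 p0 Kn n0 e.
have nR : 0 < INR nn by apply: lt_0_INR; apply/ltP.
have A : (1 + h * p) ^ nn <= exp (INR nn * (h * p)).
  rewrite -exp_pow_nat; apply: pow_incr; split; first nra.
  have := exp_ineq1_le (h * p); lra.
have B : exp (INR (nn - K) * (h / (1 + h))) <= (1 + h) ^ (nn - K).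
  rewrite -exp_pow_nat; apply: pow_incr; split; first by apply: Rlt_le; apply: exp_pos.
  exact: exp_h_le.
have B0 : 0 < exp (INR (nn - K) * (h / (1 + h))) := exp_pos _.
have C : (1 + h * p) ^ nn / (1 + h) ^ (nn - K) <=
         exp (INR nn * (h * p)) / exp (INR (nn - K) * (h / (1 + h))).
  apply: Rmult_le_compat; first by apply: pow_le; nra.
  - by apply: Rlt_le; apply: Rinv_0_lt_compat; lra.
  - exact: A.
  - by apply: Rinv_le_contravar.
apply: (Rle_trans _ _ _ C).
rewrite /Rdiv -exp_Ropp -exp_plus; apply: exp_le_mono.
rewrite minus_INR; last by apply/leP.
have eK : INR K = INR nn * (1 - p - 2 * h).
  have : INR K / INR nn = 1 - p - 2 * h by lra.
  move=> ee; rewrite -ee; field; lra.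
rewrite eK.
have hh : 0 < 1 + h by lra.
have p1 : p <= 1.
  have : 0 <= INR K / INR nn by apply: Rmult_le_pos; [apply: pos_INR| apply: Rlt_le; apply: Rinv_0_lt_compat; lra].
  lra.
apply: (Rmult_le_reg_r (1 + h)) => //.
have ee : (INR nn * (h * p) + - ((INR nn - INR nn * (1 - p - 2 * h)) * (h / (1 + h)))) * (1 + h)
   = INR nn * h * p * (1 + h) - INR nn * (p + 2 * h) * h by field; lra.
rewrite ee.
have ee2 : - (INR nn * h ^ 2 / (1 + h)) * (1 + h) = - (INR nn * h ^ 2) by field; lra.
rewrite ee2.
have H : INR nn * h * p * (1 + h) - INR nn * (p + 2 * h) * h = - (INR nn * h ^ 2) - INR nn * h ^ 2 * (1 - p) by ring.
have H2 : 0 <= INR nn * h ^ 2 * (1 - p).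
  apply: Rmult_le_pos; [apply: Rmult_le_pos; [lra| apply: pow_le; lra] | lra].
lra.
Qed.
End RealAux.
Section Final.
Local Open Scope R_scope.

Lemma main_real (F : finFieldType) (n l : nat) (rho : R) (T : 'I_n -> {set F}) :
  (1 <= l)%N -> (l < #|F|)%N -> 0 < rho -> rho < 1 - INR l / INR #|F| ->
  (forall i, #|T i| = l) ->
  n_threshold #|F| l rho 8 <= INR n ->
  mixing (lr_ball T rho) (mix_delta #|F| l rho).
Proof.
move=> hl hlq hr0 hr1 HT hth a b z a0 b0.
set q := #|F| in hlq hr1 hth *.
have q2 : (2 <= q)%N by lia.
have qR : 2 <= INR q by have := le_INR _ _ (leP q2).
have lR : 1 <= INR l by have := le_INR _ _ (leP hl).
have lqR : INR l < INR q by apply: lt_INR; apply/ltP.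
have lq0 : 0 < INR l / INR q by apply: Rdiv_lt_0_compat; lra.
set eps := 1 - INR l / INR q - rho.
have he : 0 < eps by rewrite /eps; lra.
have eps1 : eps <= 1 - rho by rewrite /eps; lra.
have ln2p : 0 < ln 2 by have := ln_lt_2; lra.
have ln2le : ln 2 <= 1 by have := ln_le_sub1 (Rlt_0_2); lra.
have lnq : ln 2 <= ln (INR q) by apply: ln_le_mono; lra.
have lqp : 0 < ln (INR q) by lra.
have L2 : 1 <= log2 (INR q).
  rewrite /log2 /Rdiv; apply: (Rmult_le_reg_r (ln 2)) => //.
  rewrite Rmult_assoc Rinv_l; lra.
set u := rho * eps.
have u0 : 0 < u by rewrite /u; nra.
have u4 : u <= 1 / 4.
  have h1 : rho * eps <= rho * (1 - rho) by apply: Rmult_le_compat_l; lra.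
  have h2 : 0 <= (rho - 1/2) ^ 2 by apply: pow2_ge_0.
  rewrite /u; nra.
have ur : u <= rho by rewrite /u; nra.
set x := log2 (INR q) / u.
have xu : x * u = log2 (INR q) by rewrite /x; field; lra.
have x4 : 4 <= x.
  have : 4 * u <= x * u by lra.
  move=> h; apply: (Rmult_le_reg_r u) => //.
have hn : x ^ 8 <= INR n.
  move: hth; rewrite /n_threshold -/eps -/u -/x.
  have -> : (8 : R) = INR 8 by simpl; lra.
  by rewrite Rpower_pow; lra.
have rn : x ^ 7 <= rho * INR n.
  have h1 : u * x ^ 8 <= u * INR n by apply: Rmult_le_compat_l; lra.
  have h2 : x ^ 7 <= u * x ^ 8.
    have -> : u * x ^ 8 = (x * u) * x ^ 7 by ring.
    have : 0 <= x ^ 7 by apply: pow_le; lra.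
    nra.
  have h3 : u * INR n <= rho * INR n by apply: Rmult_le_compat_r; [apply: pos_INR | lra].
  lra.
have x7 : 16384 <= x ^ 7.
  have : 4 ^ 7 <= x ^ 7 by apply: pow_incr; lra.
  simpl; lra.
have [hK1 hK2] := base_Int_part (rho * INR n).
have Z0 : (0 <= Int_part (rho * INR n))%Z by apply: le_IZR; simpl; lra.
set K := Z.to_nat (Int_part (rho * INR n)).
have KR : INR K = IZR (Int_part (rho * INR n)) by rewrite INR_IZR_INZ /K Z2Nat.id.
rewrite -KR in hK1 hK2.
have rho1 : rho < 1 by lra.
have nR : 0 < INR n by nra.
have K0 : (0 < K)%N by apply/ltP; apply: INR_lt; simpl; lra.
have Kn : (K < n)%N by apply/ltP; apply: INR_lt; nra.
have KQ : (K * q <= n * (q - l))%N.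
  apply/leP; apply: INR_le; rewrite !mult_INR minus_INR; last by apply/leP; apply: ltnW.
  have : rho * INR q < INR q - INR l.
    have : rho * INR q < (1 - INR l / INR q) * INR q by apply: Rmult_lt_compat_r; lra.
    have -> : (1 - INR l / INR q) * INR q = INR q - INR l by field; lra.
    done.
  nra.
have HS1 : forall y, y \in lr_ball T rho -> (#|badset T y| <= K)%N.
  move=> y; rewrite inE /Rleb'; case: Rle_dec => // hy _.
  apply/leP; apply/Nat.lt_succ_r; apply: INR_lt; rewrite S_INR; apply: (Rle_lt_trans _ _ _ hy); lra.
have HS2 : forall y, (#|badset T y| == K)%N -> y \in lr_ball T rho.
  move=> y /eqP hy; rewrite inE /Rleb'; case: Rle_dec => // [] [].
  by rewrite /badset in hy; rewrite hy.
set D := (2 * n ^ 2 * (q - l))%N.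
set E := (K * (n * (q - l) - K * q))%N.
have M := main_nat HT K0 Kn KQ hlq z a0 b0 HS1 HS2 D E.
set S := lr_ball T rho in M *.
set V0 := VV F n l in M.
set G0 := Gb F n l K in M.
have qlR : INR (q - l) = INR q - INR l by rewrite minus_INR //; apply/leP; apply: ltnW.
have nKR : INR (n - K) = INR n - INR K by rewrite minus_INR //; apply/leP; apply: ltnW.
have vR : INR V0 = INR l * (INR q - INR l) * INR n by rewrite /V0 /VV !mult_INR qlR.
have dR : INR D = 2 * INR n ^ 2 * (INR q - INR l).
  rewrite /D !mult_INR ?INR_expn qlR.
  have -> : INR 2 = 2 by simpl; lra.
  ring.
have eR : INR E = INR K * (INR n * (INR q - INR l) - INR K * INR q).
  by rewrite /E mult_INR minus_INR ?(mult_INR n) ?mult_INR ?qlR //; apply/leP.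
have ABn := AB K0 Kn KQ hlq a0 b0.
have gR : INR G0 = INR K * INR l * INR l * INR V0 +
   ((INR n - INR K) * (INR q - INR l) - INR K * INR l) * ((INR n - INR K) * (INR q - INR l)) * INR l ^ 2.
  rewrite /G0 /Gb plus_INR !mult_INR (minus_INR (Bw F n l K) (Aw l K)); last by apply/leP.
  rewrite /Aw /Bw !mult_INR ?INR_expn nKR qlR; ring.
clearbody D E V0 G0.
have MR := le_INR _ _ (leP M).
rewrite !mult_INR !INR_expn !plus_INR ?mult_INR S_INR in MR.
have Spos : (0 < #|S|)%N.
  have h := levelK_le HT HS2.
  have c1 : (0 < 'C(n, K))%N by rewrite bin_gt0 ltnW.
  have c2 : (0 < (q - l) ^ K)%N by rewrite expn_gt0 subn_gt0 hlq.
  have c3 : (0 < l ^ (n - K))%N by rewrite expn_gt0 hl.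
  by apply: leq_trans h; rewrite !muln_gt0 c1 c2 c3.
have sR : 0 < INR #|S| by apply: lt_0_INR; apply/ltP.
have -> : mix_prob S a b z = INR (Ncount S a b z) / (INR #|S| * INR #|S|).
  by rewrite /mix_prob mult_INR.
set NN := INR (Ncount S a b z) in MR *.
set v := INR V0 in MR vR gR.
set g := INR G0 in MR gR.
set d := INR D in MR dR.
set e := INR E in MR eR.
set sS := INR #|S| in MR sR *.
set nn := INR n in MR rn hn nR vR dR eR gR nKR hK1 hK2 *.
have KR0 : 0 <= INR K by apply: pos_INR.
have qlp : 0 < INR q - INR l by lra.
have vp : 0 < v by rewrite vR; apply: Rmult_lt_0_compat; [nra|lra].
have dp : 0 < d by rewrite dR; apply: Rmult_lt_0_compat; [nra|lra].
have KqR : INR K * INR q <= nn * (INR q - INR l).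
  have := le_INR _ _ (leP KQ); rewrite !mult_INR qlR //.
have ep : 0 <= e by rewrite eR; apply: Rmult_le_pos; lra.
have ABR : INR K * INR l <= (nn - INR K) * (INR q - INR l) by nra.
have Kle : INR K <= nn by nra.
have gp : 0 <= g.
  rewrite gR; apply: Rplus_le_le_0_compat.
    repeat apply: Rmult_le_pos; lra.
  apply: Rmult_le_pos; [apply: Rmult_le_pos; [lra|]|apply: pow_le; lra].
  apply: Rmult_le_pos; lra.
set h := e / d.
set p := g / (v * v).
have h0 : 0 <= h by apply: Rmult_le_pos => //; apply: Rlt_le; apply: Rinv_0_lt_compat.
have p0 : 0 <= p by apply: Rmult_le_pos => //; apply: Rlt_le; apply: Rinv_0_lt_compat; nra.
have hp : p + 2 * h = 1 - INR K / nn.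
  rewrite /p /h gR vR dR eR; field; repeat split; lra.
have E1 : d * (v * v) + e * g = d * (v * v) * (1 + h * p) by rewrite /h /p; field; split; lra.
have E2 : d + e = d * (1 + h) by rewrite /h; field; lra.
have E3 : d ^ n = d ^ (n - K) * d ^ K.
  rewrite -pow_add; congr (_ ^ _); rewrite -/(addn (n - K) K) subnK //; exact: ltnW.
rewrite E1 E2 !Rpow_mult_distr E3 in MR.
have Pp : 0 < v ^ n * v ^ n * d ^ (n - K) * d ^ K.
  repeat apply: Rmult_lt_0_compat; apply: pow_lt => //.
have hh : 0 < (1 + h) ^ (n - K) by apply: pow_lt; lra.
have Q : NN * (1 + h) ^ (n - K) <= (nn + 1) ^ 2 * (sS * sS) * (1 + h * p) ^ n.
  apply: (Rmult_le_reg_r _ _ _ Pp).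
  have LL1 : NN * (1 + h) ^ (n - K) * (v ^ n * v ^ n * d ^ (n - K) * d ^ K) =
    NN * (v ^ n * v ^ n) * (d ^ (n - K) * (1 + h) ^ (n - K) * d ^ K) by ring.
  have LL2 : (nn + 1) ^ 2 * (sS * sS) * (1 + h * p) ^ n * (v ^ n * v ^ n * d ^ (n - K) * d ^ K) =
    (nn + 1) * sS * ((nn + 1) * sS) * (d ^ (n - K) * d ^ K * (v ^ n * v ^ n) * (1 + h * p) ^ n) by ring.
  by rewrite LL1 LL2.
have step1 : NN / (sS * sS) <= (nn + 1) ^ 2 * ((1 + h * p) ^ n / (1 + h) ^ (n - K)).
  have LL1 : NN / (sS * sS) = (NN * (1 + h) ^ (n - K)) * / (sS * sS * (1 + h) ^ (n - K)) by field; lra.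
  have LL2 : (nn + 1) ^ 2 * ((1 + h * p) ^ n / (1 + h) ^ (n - K)) =
     ((nn + 1) ^ 2 * (sS * sS) * (1 + h * p) ^ n) * / (sS * sS * (1 + h) ^ (n - K)) by field; lra.
  rewrite LL1 LL2; apply: Rmult_le_compat_r => //.
  apply: Rlt_le; apply: Rinv_0_lt_compat; apply: Rmult_lt_0_compat => //; nra.
have step2 := chern h0 p0 (ltnW Kn) (leq_trans K0 (ltnW Kn)) hp.
have Kn0 : 0 <= INR K / nn by apply: Rmult_le_pos => //; apply: Rlt_le; apply: Rinv_0_lt_compat.
have hup : h <= 1 / 2 by lra.
have Kb : (9/10) * (rho * nn) <= INR K by lra.
have epsq : INR q * eps = INR q - INR l - rho * INR q by rewrite /eps; field; lra.
have hlow : (9/20) * u <= h.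
  have B1 : INR K * INR q <= rho * nn * INR q by apply: Rmult_le_compat_r; lra.
  have B2 : nn * (INR q - INR l) * eps <= nn * INR q * eps.
    apply: Rmult_le_compat_r; [lra|]; apply: Rmult_le_compat_l; lra.
  have B : nn * (INR q - INR l) * eps <= nn * (INR q - INR l) - INR K * INR q by nra.
  have C : (9/10) * (rho * nn) * (nn * (INR q - INR l) * eps) <=
           INR K * (nn * (INR q - INR l) - INR K * INR q).
    apply: Rmult_le_compat => //.
      nra.
    apply: Rmult_le_pos; [nra|lra].
  rewrite /h; apply: (Rmult_le_reg_r d) => //.
  have -> : e / d * d = e by field; lra.
  rewrite eR; apply: (Rle_trans _ _ _ _ C); rewrite dR /u; apply: Req_le; field.
set Lr := ln (((INR q - INR l) * (1 - rho)) / (rho * INR l)).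
have eqd : mix_delta q l rho * ln (INR q) = Lr * ln 2 * (rho ^ 4 * eps ^ 2) / (16 * ln (INR q)).
  rewrite /mix_delta /log2 -/eps -/Lr; field; split; lra.
have Rv0 : 0 < ((INR q - INR l) * (1 - rho)) / (rho * INR l).
  apply: Rdiv_lt_0_compat; nra.
have Rvle : ((INR q - INR l) * (1 - rho)) / (rho * INR l) <= INR q * / rho.
  have : (INR q - INR l) * (1 - rho) <= INR q * INR l by nra.
  move=> hh1; rewrite /Rdiv; apply: (Rmult_le_reg_r (rho * INR l)); first nra.
  rewrite Rmult_assoc Rinv_l ?Rmult_1_r; last nra.
  have -> : INR q * / rho * (rho * INR l) = INR q * INR l by field; lra.
  exact: hh1.
have ir0 : 0 < / rho by apply: Rinv_0_lt_compat.
have lnR : Lr <= ln (INR q) + ln (/ rho).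
  rewrite -ln_mult; [|lra|lra]; exact: ln_le_mono.
have lir0 : 0 <= ln (/ rho).
  rewrite -ln_1; apply: ln_le_mono; [lra|].
  apply: (Rmult_le_reg_l rho) => //; rewrite Rinv_r; lra.
have lir1 : ln (/ rho) <= / rho - 1 by apply: ln_le_sub1.
have key : Lr * ln 2 <= ln (INR q) * / rho.
  have k1 : Lr * ln 2 <= (ln (INR q) + ln (/ rho)) * ln 2 by apply: Rmult_le_compat_r; lra.
  have k2 : ln (/ rho) * ln 2 <= ln (/ rho) * ln (INR q) by apply: Rmult_le_compat_l.
  have k3 : ln (INR q) * ln 2 <= ln (INR q) by nra.
  have k4 : ln (INR q) * (1 + ln (/ rho)) <= ln (INR q) * / rho by apply: Rmult_le_compat_l; lra.
  nra.
have dlb : mix_delta q l rho * ln (INR q) <= u ^ 2 / 16.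
  rewrite eqd.
  have r4 : 0 <= rho ^ 4 * eps ^ 2 by apply: Rmult_le_pos; apply: pow_le; lra.
  have m1 : Lr * ln 2 * (rho ^ 4 * eps ^ 2) / (16 * ln (INR q)) <=
            ln (INR q) * / rho * (rho ^ 4 * eps ^ 2) / (16 * ln (INR q)).
    apply: Rmult_le_compat_r; first by apply: Rlt_le; apply: Rinv_0_lt_compat; lra.
    by apply: Rmult_le_compat_r.
  have m2 : ln (INR q) * / rho * (rho ^ 4 * eps ^ 2) / (16 * ln (INR q)) = rho ^ 3 * eps ^ 2 / 16.
    by field; split; lra.
  have m3 : rho ^ 3 * eps ^ 2 <= u ^ 2.
    rewrite /u; have : 0 <= rho ^ 2 * eps ^ 2 by apply: Rmult_le_pos; apply: pow_le; lra.
    move=> hh2; have -> : (rho * eps) ^ 2 = rho ^ 2 * eps ^ 2 by ring.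
    have -> : rho ^ 3 * eps ^ 2 = rho * (rho ^ 2 * eps ^ 2) by ring.
    nra.
  lra.
have x8p : 0 < x ^ 8 by apply: pow_lt; lra.
have lnb : ln (nn + 1) <= nn * u ^ 2 / 30.
  set t := nn / x ^ 8.
  have nnt : nn = x ^ 8 * t by rewrite /t; field; lra.
  have t1 : 1 <= t.
    apply: (Rmult_le_reg_l (x ^ 8)) => //; rewrite -nnt; lra.
  have a1 : ln (nn + 1) <= ln (2 * nn) by apply: ln_le_mono; lra.
  have a2 : ln (2 * nn) = ln 2 + ln (x ^ 8) + ln t.
    rewrite nnt -Rmult_assoc ln_mult; [|nra|lra]; rewrite ln_mult //; lra.
  have a3 : ln (x ^ 8) = 8 * ln x.
    rewrite ln_pow; [|lra]; have -> : INR 8 = 8 by simpl; lra. done.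
  have a4 : ln x <= x - 1 by apply: ln_le_sub1; lra.
  have a5 : ln t <= t - 1 by apply: ln_le_sub1; lra.
  have x5 : 1024 <= x ^ 5.
    have : 4 ^ 5 <= x ^ 5 by apply: pow_incr; lra.
    simpl; lra.
  have xu1 : 1 <= x * u by lra.
  have b1 : x ^ 6 * t <= nn * u ^ 2.
    rewrite nnt.
    have -> : x ^ 8 * t * u ^ 2 = x ^ 6 * t * ((x * u) ^ 2) by ring.
    have y0 : 0 <= x ^ 6 * t by apply: Rmult_le_pos; [apply: pow_le|]; lra.
    have y1 : 1 <= (x * u) ^ 2.
      have := pow_incr 1 (x * u) 2; rewrite pow1; apply; lra.
    have := Rmult_le_compat_l _ _ _ y0 y1; lra.
  have b2 : 1024 * x * t <= x ^ 6 * t.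
    have -> : x ^ 6 * t = x ^ 5 * (x * t) by ring.
    have y0 : 0 <= x * t by apply: Rmult_le_pos; lra.
    have := Rmult_le_compat_r _ _ _ y0 x5; lra.
  have b3 : 8 * x + t <= 30 * x * t.
    have y1 : x * 1 <= x * t by apply: Rmult_le_compat_l; lra.
    have y2 : 1 * t <= x * t by apply: Rmult_le_compat_r; lra.
    lra.
  lra.
apply: (Rle_trans _ _ _ step1).
apply: (Rle_trans _ ((nn + 1) ^ 2 * exp (- (nn * h ^ 2 / (1 + h))))).
  apply: Rmult_le_compat_l; [apply: pow_le; lra | exact: step2].
rewrite /Rpower.
have e2 : (nn + 1) ^ 2 = exp (2 * ln (nn + 1)).
  have := exp_pow_nat (ln (nn + 1)) 2; rewrite exp_ln; last lra.
  move=> ->; congr exp; simpl; lra.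
rewrite e2 -exp_plus; apply: exp_le_mono.
have f1 : nn * h ^ 2 * (2 / 3) <= nn * h ^ 2 / (1 + h).
  rewrite /Rdiv; apply: Rmult_le_compat_l; first by apply: Rmult_le_pos; [lra|apply: pow_le].
  apply: (Rmult_le_reg_l (1 + h)); first lra.
  rewrite Rinv_r; lra.
have f2 : (81/400) * u ^ 2 <= h ^ 2.
  have -> : (81/400) * u ^ 2 = ((9/20) * u) ^ 2 by field.
  apply: pow_incr; lra.
have f3 : - (mix_delta q l rho * nn) * ln (INR q) = - (nn * (mix_delta q l rho * ln (INR q))) by ring.
rewrite f3.
have f4 : nn * (mix_delta q l rho * ln (INR q)) <= nn * (u ^ 2 / 16) by apply: Rmult_le_compat_l; lra.
have f5 : nn * ((81/400) * u ^ 2) <= nn * h ^ 2 by apply: Rmult_le_compat_l; lra.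
have f6 : 0 <= nn * u ^ 2 by apply: Rmult_le_pos; [lra | apply: pow_le; lra].
lra.
Qed.
End Final.
Theorem corollary4p6 :
  exists c : R, Rlt 0 c /\
  forall (F : finFieldType) (n l : nat) (rho : R) (T : 'I_n -> {set F}),
    (1 <= l)%N -> (l < #|F|)%N ->
    Rlt 0 rho -> Rlt rho (Rminus 1 (Rdiv (INR l) (INR #|F|))) ->
    (forall i, #|T i| = l) ->
    Rle (n_threshold #|F| l rho c) (INR n) ->
    mixing (lr_ball T rho) (mix_delta #|F| l rho).
Proof.
exists (IZR 8); split; first by lra.
move=> F n l rho T hl hlq hr0 hr1 HT hth.
exact: (main_real hl hlq hr0 hr1 HT hth).
Qed.
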